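(* Let $\mathfrak{X}=(X,\{R_0,R_1,R_2,R_3,R_4\})$ be a skew-symmetric $4$-class association scheme with $R_1^\top=R_2$ and $R_3^\top=R_4$, and suppose that the character table of $\mathfrak X$ is of type $3$ (in the sense described in the context). Then the digraph $(X,R_i)$ has $5$ distinct eigenvalues for each $1\leq i\leq 4$.
   Context: An association scheme on a finite set $X$ is a partition of $X\times X$ into relations $R_0$ (diagonal), $R_1,\dots,R_d$ closed under transposition, with constant intersection numbers; skew-symmetric means $R_0$ is the only symmetric relation. Schemes with $\le4$ classes are commutative; the primitive idempotents $E_j$ of the Bose–Mesner algebra satisfy $A_iE_j=p_i(j)E_j$, and the character table has $(j,i)$-entry $p_i(j)$. The symmetrization $\tilde{\mathfrak X}=(X,\{R_0,R_1\cup R_2,R_3\cup R_4\})$ has character table with rows $(1,k_1,k_2)$, $(1,r_1,t_1)$, $(1,r_2,t_2)$ (rows $\tilde E_0,\tilde E_1,\tilde E_2$ with multiplicities $1,m_1,m_2$). It is known that the primitive idempotents of $\mathfrak X$ can be ordered so that its character table (columns $A_0,\dots,A_4$) has rows $(1,k_1/2,k_1/2,k_2/2,k_2/2)$, $(1,\rho,\bar\rho,\tau,\bar\tau)$, $(1,\sigma,\bar\sigma,\omega,\bar\omega)$, $(1,\bar\sigma,\sigma,\bar\omega,\omega)$, $(1,\bar\rho,\rho,\bar\tau,\tau)$, where one of three cases holds; type 3 is the case $\rho=(r_1+\sqrt{-y})/2$, $\tau=(t_1+\sqrt{-z})/2$, $\sigma=(r_2+\sqrt{-b})/2$, $\omega=(t_2-\sqrt{-c})/2$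 with $b,c,y,z$ all positive reals. Eigenvalues of a digraph $(X,R)$ are those of its $01$ adjacency matrix. *)

(* Defs.v *)
(* Complex numbers are modelled by algC (algebraic complex
   numbers), which contains all eigenvalues of integer matrices. *)
From HB Require Import structures.
From mathcomp Require Import all_boot all_order all_algebra all_field.
Set Implicit Arguments. Unset Strict Implicit. Unset Printing Implicit Defensive.
Import Order.TTheory GRing.Theory Num.Theory.
Local Open Scope ring_scope.

(* A 4-class scheme on X = 'I_n is given by the class function
   r : X -> X -> 'I_5, where R_i = [set (x,y) | r x y == i]. *)

Definition adj (n : nat) (r : 'I_n -> 'I_n -> 'I_5) (i : 'I_5) : 'M[algC]_n :=
  \matrix_(x, y) ((r x y == i)%:R : algC).

Definition is_assoc_scheme4 (n : nat) (r : 'I_n -> 'I_n -> 'I_5) : Prop :=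
  [/\ (forall x y, (r x y == 0) = (x == y)),
      (forall i : 'I_5, exists x y, r x y = i),
      (forall i : 'I_5, exists i' : 'I_5, forall x y, (r x y == i) = (r y x == i')) &
      (forall i j k : 'I_5, exists p : nat, forall x y, r x y = k ->
          #|[set z | (r x z == i) && (r z y == j)]| = p)].

Definition skew_1234 (n : nat) (r : 'I_n -> 'I_n -> 'I_5) : Prop :=
  forall x y, (r x y == 1 :> 'I_5) = (r y x == 2 :> 'I_5) /\
              (r x y == 3 :> 'I_5) = (r y x == 4 :> 'I_5).

(* E_0..E_4 are the primitive idempotents of the Bose-Mesner algebra and
   P (with (j,i)-entry P j i) is the corresponding character table:
   E_j lie in the span of the A_i, are nonzero, pairwise orthogonal
   idempotents summing to I, and A_i E_j = P j i E_j.  (Five such idempotents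
   in the 5-dimensional BM algebra are exactly its primitive idempotents.) *)
Definition char_table (n : nat) (r : 'I_n -> 'I_n -> 'I_5)
  (E : 'I_5 -> 'M[algC]_n) (P : 'I_5 -> 'I_5 -> algC) : Prop :=
  [/\ (forall j, exists c : 'I_5 -> algC, E j = \sum_i c i *: adj r i),
      (forall j, E j != 0),
      (forall j k, E j *m E k = (j == k)%:R *: E j),
      \sum_j E j = 1%:M &
      (forall i j, adj r i *m E j = P j i *: E j)].

Definition sqrtneg (y : algC) : algC := 'i * sqrtC y.

Definition row5 (a0 a1 a2 a3 a4 : algC) (i : 'I_5) : algC :=
  nth 0 [:: a0; a1; a2; a3; a4] i.

Definition type3_table (P : 'I_5 -> 'I_5 -> algC) : Prop :=
  exists k1 k2 r1 r2 t1 t2 b c y z : algC,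
    [/\ [/\ k1 \is Num.real, k2 \is Num.real, r1 \is Num.real, r2 \is Num.real
            & (t1 \is Num.real) && (t2 \is Num.real)],
        [/\ 0 < b, 0 < c, 0 < y & 0 < z] &
        (let rho := (r1 + sqrtneg y) / 2 in
        let tau := (t1 + sqrtneg z) / 2 in
        let sig := (r2 + sqrtneg b) / 2 in
        let om  := (t2 - sqrtneg c) / 2 in
        [/\ P 0 =1 row5 1 (k1 / 2) (k1 / 2) (k2 / 2) (k2 / 2),
            P 1 =1 row5 1 rho rho^* tau tau^*,
            P 2 =1 row5 1 sig sig^* om om^*,
            P 3 =1 row5 1 sig^* sig om^* om &
            P 4 =1 row5 1 rho^* rho tau^* tau])].

Definition num_distinct_eigenvalues (n : nat) (A : 'M[algC]_n) (m : nat) : Prop :=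
  exists s : seq algC, [/\ uniq s, size s = m & forall a, eigenvalue A a <-> a \in s].

(* Main.v *)
Require Import Defs.
From HB Require Import structures.
From mathcomp Require Import all_boot all_order all_algebra all_field.
From mathcomp Require Import ring.
Import Order.TTheory GRing.Theory Num.Theory.
Local Open Scope ring_scope.
Set Implicit Arguments. Unset Strict Implicit. Unset Printing Implicit Defensive.

Lemma scal_inj m n (M : 'M[algC]_(m, n)) (a b : algC) : M != 0 -> a *: M = b *: M -> a = b.
Proof.
move=> nz /eqP; rewrite -subr_eq0 -scalerBl scalemx_eq0 (negbTE nz) orbF subr_eq0.
by move/eqP.
Qed.

Lemma adj_sum n (r : 'I_n -> 'I_n -> 'I_5) E P : char_table r E P ->
  forall i, adj r i = \sum_j P j i *: E j.
Proof.
case=> _ _ _ Hsum Hev i.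
rewrite -[adj r i]mulmx1 -Hsum mulmx_sumr; apply: eq_bigr => j _; exact: Hev.
Qed.

Lemma E_adj n (r : 'I_n -> 'I_n -> 'I_5) E P : char_table r E P ->
  forall i j, E j *m adj r i = P j i *: E j.
Proof.
move=> H i j; have [_ _ Horth _ _] := H.
rewrite (adj_sum H) mulmx_sumr (bigD1 j) //= big1 ?addr0.
  by rewrite -scalemxAr Horth eqxx scale1r.
by move=> k nkj; rewrite -scalemxAr Horth eq_sym (negbTE nkj) scale0r scaler0.
Qed.

Lemma eig n (r : 'I_n -> 'I_n -> 'I_5) E P : char_table r E P ->
  forall i a, eigenvalue (adj r i) a <-> exists j, a = P j i.
Proof.
move=> H i a; have [_ Hnz _ Hsum Hev] := H; split.
  move/eigenvalueP => [v Hv nzv].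
  case: (pickP (fun j => a == P j i)) => [j /eqP -> | Hn]; first by exists j.
  case/negP: nzv; apply/eqP.
  rewrite -[v]mulmx1 -Hsum mulmx_sumr big1 // => j _.
  apply/eqP; have := Hn j => /negbT; apply: contraR => nz.
  have e1 : v *m (adj r i *m E j) = P j i *: (v *m E j) by rewrite Hev scalemxAr.
  rewrite mulmxA Hv -scalemxAl in e1.
  by apply/eqP; exact: (scal_inj nz e1).
move=> [j ->]; apply/eigenvalueP.
case: (pickP (fun k => row k (E j) != 0)) => [k nzk | Hn].
  by exists (row k (E j)) => //; rewrite -row_mul (E_adj H); apply/rowP => y; rewrite !mxE.
case/negP: (Hnz j); apply/eqP/row_matrixP => k; rewrite row0.
by move/negbFE/eqP: (Hn k).
Qed.

Lemma indep n (r : 'I_n -> 'I_n -> 'I_5) E P : char_table r E P ->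
  forall lam : 'I_5 -> algC, (forall i, \sum_j lam j * P j i = 0) -> forall k, lam k = 0.
Proof.
move=> H lam Hl k; have [Hspan Hnz Horth _ Hev] := H.
have [c Hc] := Hspan k.
pose d j := \sum_i c i * P j i.
have HE : forall j, E k *m E j = d j *: E j.
  move=> j; rewrite Hc mulmx_suml /d scaler_suml; apply: eq_bigr => i _.
  by rewrite -scalemxAl Hev scalerA.
have dk : d k = 1.
  by apply: (scal_inj (Hnz k)); rewrite -HE Horth eqxx !scale1r.
have dj : forall j, j != k -> d j = 0.
  move=> j njk; apply: (scal_inj (Hnz j)); rewrite -HE Horth eq_sym (negbTE njk).
  by rewrite !scale0r.
have : \sum_j lam j * d j = lam k.
  rewrite (bigD1 k) //= dk mulr1 big1 ?addr0 // => j njk.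
  by rewrite dj ?mulr0.
move <-; rewrite /d.
under eq_bigr do rewrite mulr_sumr.
rewrite exchange_big big1 // => i _.
transitivity (c i * \sum_j lam j * P j i); last by rewrite Hl mulr0.
by rewrite mulr_sumr; apply: eq_bigr => j _; ring.
Qed.

Lemma rowsum n (r : 'I_n -> 'I_n -> 'I_5) E P : (0 < n)%N -> char_table r E P ->
  forall j k, j != k -> \sum_i P j i = \sum_i P k i -> \sum_i P j i = 0.
Proof.
move=> n0 H j k njk ejk; have [_ Hnz Horth _ Hev] := H.
pose J : 'M[algC]_n := const_mx 1.
have HJ : J = \sum_i adj r i.
  apply/matrixP => x y; rewrite summxE !mxE.
  under eq_bigr do rewrite mxE.
  rewrite (bigD1 (r x y)) //= eqxx big1 ?addr0 // => i ni.
  by rewrite eq_sym (negbTE ni).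
have HJE : forall l, J *m E l = (\sum_i P l i) *: E l.
  by move=> l; rewrite HJ mulmx_suml scaler_suml; apply: eq_bigr => i _; rewrite Hev.
have HEJ : forall l, E l *m J = (\sum_i P l i) *: E l.
  by move=> l; rewrite HJ mulmx_sumr scaler_suml; apply: eq_bigr => i _; rewrite (E_adj H).
have HJJ : J *m J = n%:R *: J.
  apply/matrixP => x y; rewrite !mxE.
  under eq_bigr do rewrite !mxE mulr1.
  by rewrite sumr_const card_ord mulr1.
have HJXJ : forall X, J *m X *m J = (\sum_w \sum_z X z w) *: J.
  move=> X; apply/matrixP => x y; rewrite !mxE mulr1.
  apply: eq_bigr => w _; rewrite !mxE mulr1.
  by apply: eq_bigr => z _; rewrite !mxE mul1r.
have nJ : J != 0.
  apply/negP => /eqP/matrixP/(_ (Ordinal n0) (Ordinal n0)).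
  by rewrite !mxE => /eqP; rewrite oner_eq0.
have n0R : (n%:R : algC) != 0 by rewrite pnatr_eq0 -lt0n.
set s := \sum_i P j i in ejk *.
apply/eqP; case: (eqVneq s 0) => // ns.
have Hg : forall l, \sum_i P l i = s -> exists g, (s * s) *: E l = g *: J.
  move=> l el; exists (\sum_w \sum_z E l z w); rewrite -HJXJ HJE -scalemxAl HEJ el.
  by rewrite scalerA.
have [gj Hj] := Hg j erefl.
have [gk Hk] := Hg k (esym ejk).
have := congr2 mulmx Hj Hk.
rewrite -!scalemxAl -!scalemxAr HJJ !scalerA Horth (negbTE njk) scale0r scaler0 => /esym/eqP.
rewrite scalemx_eq0 (negbTE nJ) orbF !mulf_eq0 (negbTE n0R) orbF => /orP [] /eqP g0.
  by move: Hj; rewrite g0 scale0r => /eqP; rewrite scalemx_eq0 (negbTE (Hnz j)) orbF mulf_eq0 orbb (negbTE ns).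
by move: Hk; rewrite g0 scale0r => /eqP; rewrite scalemx_eq0 (negbTE (Hnz k)) orbF mulf_eq0 orbb (negbTE ns).
Qed.
Lemma ord5 (j : 'I_5) : j = 0 \/ j = 1 \/ j = 2 \/ j = 3 \/ j = 4.
Proof.
case: j => [[|[|[|[|[|?]]]]] ?]; rewrite ?(ltnNge) //.
- by left; apply/val_inj.
- by right; left; apply/val_inj.
- by do 2 right; left; apply/val_inj.
- by do 3 right; left; apply/val_inj.
- by do 4 right; apply/val_inj.
Qed.

Lemma sum5 (f : 'I_5 -> algC) : \sum_i f i = f 0 + f 1 + f 2 + f 3 + f 4.
Proof.
rewrite !big_ord_recl big_ord0 addr0 !addrA.
by congr (_ + _ + _ + _ + _); congr f; apply/val_inj.
Qed.

Lemma rect_eq (x1 y1 x2 y2 : algC) : x1 \is Num.real -> y1 \is Num.real ->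
  x2 \is Num.real -> y2 \is Num.real -> x1 + 'i * y1 = x2 + 'i * y2 ->
  x1 = x2 /\ y1 = y2.
Proof.
move=> r1 s1 r2 s2 E; split.
  by rewrite -(Re_rect r1 s1) E Re_rect.
by rewrite -(Im_rect r1 s1) E Im_rect.
Qed.

Lemma nz0a (a : algC) : 0 < a -> (0 == a) = false.
Proof. by move=> h; rewrite eq_sym gt_eqF. Qed.
Lemma nza0 (a : algC) : 0 < a -> (a == 0) = false.
Proof. by move=> h; rewrite gt_eqF. Qed.
Lemma nz0Na (a : algC) : 0 < a -> (0 == - a) = false.
Proof. by move=> h; rewrite eq_sym oppr_eq0 gt_eqF. Qed.
Lemma nzNa0 (a : algC) : 0 < a -> (- a == 0) = false.
Proof. by move=> h; rewrite oppr_eq0 gt_eqF. Qed.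
Lemma nzaNb (a b : algC) : 0 < a -> 0 < b -> (a == - b) = false.
Proof. by move=> ha hb; rewrite -subr_eq0 opprK gt_eqF // addr_gt0. Qed.
Lemma nzNab (a b : algC) : 0 < a -> 0 < b -> (- a == b) = false.
Proof. by move=> ha hb; rewrite eq_sym nzaNb. Qed.

Lemma key (P : 'I_5 -> 'I_5 -> algC) (K1 K2 R1 R2 T1 T2 Y B Z C : algC) :
  K1 \is Num.real -> K2 \is Num.real -> R1 \is Num.real -> R2 \is Num.real ->
  T1 \is Num.real -> T2 \is Num.real -> Y \is Num.real -> B \is Num.real ->
  Z \is Num.real -> C \is Num.real ->
  0 < Y -> 0 < B -> 0 < Z -> 0 < C ->
  P 0 =1 row5 1 (K1 + 'i * 0) (K1 + 'i * 0) (K2 + 'i * 0) (K2 + 'i * 0) ->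
  P 1 =1 row5 1 (R1 + 'i * Y) (R1 + 'i * (- Y)) (T1 + 'i * Z) (T1 + 'i * (- Z)) ->
  P 2 =1 row5 1 (R2 + 'i * B) (R2 + 'i * (- B)) (T2 + 'i * (- C)) (T2 + 'i * C) ->
  P 3 =1 row5 1 (R2 + 'i * (- B)) (R2 + 'i * B) (T2 + 'i * C) (T2 + 'i * (- C)) ->
  P 4 =1 row5 1 (R1 + 'i * (- Y)) (R1 + 'i * Y) (T1 + 'i * (- Z)) (T1 + 'i * Z) ->
  (forall lam : 'I_5 -> algC, (forall i, \sum_j lam j * P j i = 0) -> forall k, lam k = 0) ->
  (forall j k, j != k -> \sum_i P j i = \sum_i P k i -> \sum_i P j i = 0) ->
  forall i j k, i != 0 -> P j i = P k i -> j = k.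
Proof.
move=> rK1 rK2 rR1 rR2 rT1 rT2 rY rB rZ rC hY hB hZ hC H0 H1 H2 H3 H4 Hind Hs.
have rtab : forall j, \sum_i P j i = P j 0 + P j 1 + P j 2 + P j 3 + P j 4.
  by move=> j; rewrite sum5.
have Hs1 : 1 + (R1 + 'i * Y) + (R1 + 'i * (- Y)) + (T1 + 'i * Z) + (T1 + 'i * (- Z)) = 0.
  have := Hs 1 4 isT; rewrite !rtab !H1 !H4 /row5 /=.
  by apply; ring.
have Hs2 : 1 + (R2 + 'i * B) + (R2 + 'i * (- B)) + (T2 + 'i * (- C)) + (T2 + 'i * C) = 0.
  have := Hs 2 3 isT; rewrite !rtab !H2 !H3 /row5 /=.
  by apply; ring.
have Hrt : R1 - R2 + (T1 - T2) = 0.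
  have -> : R1 - R2 + (T1 - T2) = (1 + (R1 + 'i * Y) + (R1 + 'i * (- Y)) + (T1 + 'i * Z) + (T1 + 'i * (- Z))
     - (1 + (R2 + 'i * B) + (R2 + 'i * (- B)) + (T2 + 'i * (- C)) + (T2 + 'i * C))) / 2.
    by field.
  by rewrite Hs1 Hs2 subrr mul0r.
pose lam := row5 0 1 (-1) (-1) 1.
have HR : R1 = R2 -> False.
  move=> e; have e2 : T1 = T2.
    by apply/eqP; rewrite -subr_eq0 -Hrt e subrr add0r.
  suff: lam 1 = 0 by rewrite /lam /row5 /= => /eqP; rewrite oner_eq0.
  apply: Hind => i; rewrite sum5 /row5 /= !mul0r !add0r !mul1r !mulN1r.
  have [->|[->|[->|[->|->]]]] := ord5 i;
    rewrite H1 H2 H3 H4 /row5 /= ?e ?e2; ring.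
have HT : T1 = T2 -> False.
  move=> e; apply: HR; apply/eqP; rewrite -subr_eq0 -[X in _ == X]Hrt e subrr addr0.
  done.
move=> i j k Hi.
have [ei|[->|[->|[->|->]]]] := ord5 i; first by rewrite ei eqxx in Hi.
all: have [->|[->|[->|[->|->]]]] := ord5 j; have [->|[->|[->|[->|->]]]] := ord5 k;
  rewrite ?H0 ?H1 ?H2 ?H3 ?H4 /row5 /= => E; try done.
all: apply rect_eq in E; [|by rewrite ?rpredN ?rpred0..].
all: case: E => Hre Him;
  try (by move/eqP: Him; rewrite ?nz0Na ?nzNa0 ?nz0a ?nza0 ?nzaNb ?nzNab).
all: first [by case: (HR Hre) | by case: (HR (esym Hre)) | by case: (HT Hre) | by case: (HT (esym Hre))].
Qed.

Lemma half_real (x : algC) : x \is Num.real -> x / 2 \is Num.real.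
Proof. by move=> h; rewrite rpredM // rpredV rpred_nat. Qed.

Lemma half_pos (w : algC) : 0 < w -> 0 < sqrtC w / 2.
Proof. by move=> h; rewrite divr_gt0 // sqrtC_gt0. Qed.

Lemma rectP (x w : algC) : x \is Num.real -> 0 < w ->
  ((x + sqrtneg w) / 2)^* = x / 2 + 'i * (- (sqrtC w / 2)) /\
  (x + sqrtneg w) / 2 = x / 2 + 'i * (sqrtC w / 2).
Proof.
move=> hx hw.
have e : (x + sqrtneg w) / 2 = x / 2 + 'i * (sqrtC w / 2) by rewrite /sqrtneg; ring.
split=> //; rewrite e conjC_rect ?mulrN // ?half_real // sqrtC_real // ltW //.
Qed.

Lemma rectN (x w : algC) : x \is Num.real -> 0 < w ->
  ((x - sqrtneg w) / 2)^* = x / 2 + 'i * (sqrtC w / 2) /\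
  (x - sqrtneg w) / 2 = x / 2 + 'i * (- (sqrtC w / 2)).
Proof.
move=> hx hw.
have e : (x - sqrtneg w) / 2 = x / 2 + 'i * (- (sqrtC w / 2)) by rewrite /sqrtneg; ring.
split=> //; rewrite e conjC_rect ?mulrN ?opprK // ?rpredN ?half_real // sqrtC_real // ltW //.
Qed.

Unset Implicit Arguments.
Theorem proposition4p3 (n : nat) (r : 'I_n -> 'I_n -> 'I_5) :
  is_assoc_scheme4 r -> skew_1234 r ->
  (exists (E : 'I_5 -> 'M[algC]_n) (P : 'I_5 -> 'I_5 -> algC),
      char_table r E P /\ type3_table P) ->
  forall i : 'I_5, i != 0 -> num_distinct_eigenvalues (adj r i) 5.
Proof.
move=> Hsch _ [E [P [H Ht3]]] i i0.
have n0 : (0 < n)%N.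
  case: Hsch => _ Hne _ _; have [x _] := Hne 0.
  exact: (leq_ltn_trans (leq0n x) (ltn_ord x)).
have inj : forall j k, P j i = P k i -> j = k.
  case: Ht3 => k1 [k2 [r1 [r2 [t1 [t2 [b [c [y [z [[rk1 rk2 rr1 rr2 /andP[rt1 rt2]] [hb hc hy hz]]]]]]]]]]].
  move=> [H0 H1 H2 H3 H4] j k.
  have [ey1 ey2] := rectP rr1 hy.
  have [ez1 ez2] := rectP rt1 hz.
  have [eb1 eb2] := rectP rr2 hb.
  have [ec1 ec2] := rectN rt2 hc.
  apply: (@key P (k1 / 2) (k2 / 2) (r1 / 2) (r2 / 2) (t1 / 2) (t2 / 2)
     (sqrtC y / 2) (sqrtC b / 2) (sqrtC z / 2) (sqrtC c / 2)) => //;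
    rewrite ?half_real ?sqrtC_real ?ltW ?half_pos //.
  - by move=> x; rewrite H0 !mulr0 !addr0.
  - by move=> x; rewrite H1 ey1 ey2 ez1 ez2.
  - by move=> x; rewrite H2 eb1 eb2 ec1 ec2.
  - by move=> x; rewrite H3 eb1 eb2 ec1 ec2.
  - by move=> x; rewrite H4 ey1 ey2 ez1 ez2.
  - exact: indep H.
  - exact: rowsum n0 H.
exists [seq P j i | j <- enum 'I_5]; split.
- by rewrite map_inj_uniq ?enum_uniq // => j k; exact: inj.
- by rewrite size_map size_enum_ord.
- move=> a; rewrite (eig H); split => [[j ->]|/mapP [j _ ->]]; last by exists j.
  by apply: map_f; rewrite mem_enum.
Qed.
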